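(* Let $\alpha\in\mathbb{R}\setminus\{0\}$, let $\delta^{\star}(\alpha)=1/\alpha^2$ if $\alpha\le 2$ and $\delta^{\star}(\alpha)=\frac{1}{2\alpha}\exp\{1-\frac{\alpha}{2}\}$ if $\alpha>2$, let $|\delta|\le\delta^{\star}(\alpha)$, and let $$C(u,v)=uv+\delta\left(1-e^{\alpha(u-u^2)}\right)\left(1-e^{\alpha(v-v^2)}\right),\quad (u,v)\in[0,1]^2.$$ Then Spearman's rho $\rho_C=12\int_0^1\int_0^1 C(u,v)\,du\,dv-3$ and Gini's gamma coefficient $\gamma_C=4\left\{\int_0^1 C(u,1-u)\,du-\int_0^1(u-C(u,u))\,du\right\}$ are given by $$\rho_C=\begin{cases}12\delta\left[1-\sqrt{\frac{\pi}{|\alpha|}}\,e^{\alpha/4}\,\mathrm{erfi}\left(\frac{\sqrt{|\alpha|}}{2}\right)\right]^2,&\alpha<0,\\[2mm] 12\delta\left[1-\sqrt{\frac{\pi}{\alpha}}\,e^{\alpha/4}\,\mathrm{erf}\left(\frac{\sqrt{\alpha}}{2}\right)\right]^2,&\alpha>0,\end{cases}$$ $$\gamma_C=\begin{cases}8\delta\left[1-2\sqrt{\frac{\pi}{|\alpha|}}\,e^{\alpha/4}\,\mathrm{erfi}\left(\frac{\sqrt{|\alpha|}}{2}\right)+\sqrt{\frac{\pi}{2|\alpha|}}\,e^{\alpha/2}\,\mathrm{erfi}\left(\sqrt{\frac{|\alpha|}{2}}\right)\right],&\alpha<0,\\[2mm] 8\delta\left[1-2\sqrt{\frac{\pi}{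\alpha}}\,e^{\alpha/4}\,\mathrm{erf}\left(\frac{\sqrt{\alpha}}{2}\right)+\sqrt{\frac{\pi}{2\alpha}}\,e^{\alpha/2}\,\mathrm{erf}\left(\sqrt{\frac{\alpha}{2}}\right)\right],&\alpha>0.\end{cases}$$
   Context: $\mathrm{erf}(t)=\frac{2}{\sqrt{\pi}}\int_0^t e^{-z^2}\,dz$ is the error function and $\mathrm{erfi}(t)=\frac{2}{\sqrt{\pi}}\int_0^t e^{z^2}\,dz$ is the imaginary error function. *)

(* Defs.v *)
From Stdlib Require Import Reals.
From Coquelicot Require Import Coquelicot.
Open Scope R_scope.

Definition erf (t : R) : R :=
  2 / sqrt PI * RInt (fun z => exp (- (z ^ 2))) 0 t.

Definition erfi (t : R) : R :=
  2 / sqrt PI * RInt (fun z => exp (z ^ 2)) 0 t.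

Definition delta_star (alpha : R) : R :=
  if Rle_dec alpha 2 then 1 / alpha ^ 2
  else 1 / (2 * alpha) * exp (1 - alpha / 2).

Definition Cfam (alpha delta : R) (u v : R) : R :=
  u * v + delta * (1 - exp (alpha * (u - u ^ 2))) * (1 - exp (alpha * (v - v ^ 2))).

Definition spearman_rho (C : R -> R -> R) : R :=
  12 * RInt (fun v => RInt (fun u => C u v) 0 1) 0 1 - 3.

Definition gini_gamma (C : R -> R -> R) : R :=
  4 * (RInt (fun u => C u (1 - u)) 0 1 - RInt (fun u => u - C u u) 0 1).

(* Main.v *)
Require Import Defs.
From Stdlib Require Import Reals Lra.
From Coquelicot Require Import Coquelicot.
Open Scope R_scope.

Lemma even_int (k : R -> R) (c : R) (Hk : forall z, continuous k z)
  (He : forall z, k (- z) = k z) : RInt k (- c) c = 2 * RInt k 0 c.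
Proof.
  assert (Hex : forall a b, ex_RInt k a b).
  { intros; apply (@ex_RInt_continuous R_CompleteNormedModule); intros; apply Hk. }
  rewrite <- (RInt_Chasles k (-c) 0 c) by apply Hex.
  assert (H1 : RInt k (-c) 0 = RInt k 0 c).
  { pose proof (RInt_comp_lin k (-1) 0 c 0 (Hex _ _)) as H.
    replace (-1 * c + 0) with (-c) in H by ring.
    replace (-1 * 0 + 0) with 0 in H by ring.
    rewrite <- H.
    rewrite (RInt_ext _ (fun y => opp (k y))).
    2:{ intros x _. unfold scal; simpl; unfold mult; simpl.
        replace (-1 * x + 0) with (-x) by ring. rewrite He.
        unfold opp; simpl; ring. }
    rewrite (@RInt_opp R_CompleteNormedModule) by apply Hex. apply (@opp_RInt_swap R_CompleteNormedModule), Hex. }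
  rewrite H1. unfold plus; simpl; ring.
Qed.

Lemma subst_int (k : R -> R) (c : R) (Hk : forall z, continuous k z) (Hc : 0 < c) :
  RInt (fun u => k (c * u - c / 2)) 0 1 = / c * RInt k (- c / 2) (c / 2).
Proof.
  assert (Hex : forall a b, ex_RInt k a b).
  { intros; apply (@ex_RInt_continuous R_CompleteNormedModule); intros; apply Hk. }
  pose proof (RInt_comp_lin k c (- c / 2) 0 1 (Hex _ _)) as H.
  replace (c * 0 + - c / 2) with (- c / 2) in H by field.
  replace (c * 1 + - c / 2) with (c / 2) in H by field.
  rewrite <- H.
  rewrite RInt_scal.
  2:{ apply (@ex_RInt_continuous R_CompleteNormedModule); intros.
      assert (H1 : continuous (fun y:R => c*y + -c/2) z) by (apply (@ex_derive_continuous R_AbsRing R_NormedModule); auto_derive; auto).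
      exact (continuous_comp (fun y:R => c*y + -c/2) k z H1 (Hk (c*z + -c/2))). }
  unfold scal; simpl; unfold mult; simpl.
  rewrite <- Rmult_assoc, Rinv_l by lra. rewrite Rmult_1_l.
  apply RInt_ext; intros x _. f_equal. change (c * x - c / 2 = c * x + - c / 2 :> R). field.
Qed.

Lemma RInt_scal_R (f : R -> R) (l a b : R) : ex_RInt f a b ->
  RInt (fun x => l * f x) a b = l * RInt f a b.
Proof. intros H. exact (RInt_scal f a b l H). Qed.

Lemma cont_k (s z : R) : continuous (fun z => exp (s * z ^ 2)) z.
Proof. apply (@ex_derive_continuous R_AbsRing R_NormedModule); auto_derive; auto. Qed.

Lemma E_gen (s c a : R) (Hc : 0 < c) (Ha : a = - s * (c * c)) :
  RInt (fun u => exp (a * (u - u ^ 2))) 0 1 =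
  exp (a / 4) * (2 / c) * RInt (fun z => exp (s * z ^ 2)) 0 (c / 2).
Proof.
  set (k := fun z => exp (s * z ^ 2)).
  rewrite (RInt_ext _ (fun u => exp (a / 4) * k (c * u - c / 2))).
  2:{ intros x _. unfold k. rewrite <- exp_plus. f_equal. subst a. field. }
  rewrite RInt_scal_R.
  2:{ apply (@ex_RInt_continuous R_CompleteNormedModule); intros z _.
      assert (H1 : continuous (fun y:R => c*y - c/2) z)
        by (apply (@ex_derive_continuous R_AbsRing R_NormedModule); auto_derive; auto).
      exact (continuous_comp (fun y:R => c*y - c/2) k z H1 (cont_k s (c*z - c/2))). }
  rewrite subst_int by (auto; intros; apply cont_k).
  replace (- c / 2) with (- (c / 2)) by field.
  rewrite even_int.
  - match goal with |- ?x = ?y => change (x = y :> R) end. field. lra.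
  - intros; apply cont_k.
  - intros; unfold k; f_equal; ring.
Qed.

Lemma E_pos (a : R) (Ha : 0 < a) : RInt (fun u => exp (a * (u - u ^ 2))) 0 1 =
  sqrt (PI / a) * exp (a / 4) * erf (sqrt a / 2).
Proof.
  assert (Hc : 0 < sqrt a) by (apply sqrt_lt_R0; auto).
  rewrite (E_gen (-1) (sqrt a) a Hc).
  2:{ rewrite sqrt_sqrt; lra. }
  unfold erf. rewrite sqrt_div_alt by auto.
  assert (Hp : 0 < sqrt PI) by (apply sqrt_lt_R0, PI_RGT_0).
  rewrite (RInt_ext (fun z => exp (-1 * z ^ 2)) (fun z => exp (- (z ^ 2)))).
  2:{ intros; f_equal; ring. }
  match goal with |- ?x = ?y => change (x = y :> R) end. field. lra.
Qed.

Lemma E_neg (a : R) (Ha : a < 0) : RInt (fun u => exp (a * (u - u ^ 2))) 0 1 =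
  sqrt (PI / Rabs a) * exp (a / 4) * erfi (sqrt (Rabs a) / 2).
Proof.
  assert (Hab : Rabs a = - a) by (apply Rabs_left; auto).
  assert (Hc : 0 < sqrt (Rabs a)) by (apply sqrt_lt_R0; lra).
  rewrite (E_gen 1 (sqrt (Rabs a)) a Hc).
  2:{ rewrite sqrt_sqrt; lra. }
  unfold erfi. rewrite sqrt_div_alt by lra.
  assert (Hp : 0 < sqrt PI) by (apply sqrt_lt_R0, PI_RGT_0).
  rewrite (RInt_ext (fun z => exp (1 * z ^ 2)) (fun z => exp (z ^ 2))).
  2:{ intros; f_equal; ring. }
  match goal with |- ?x = ?y => change (x = y :> R) end. field. lra.
Qed.

Lemma RInt_plus_R (f g : R -> R) (a b : R) : ex_RInt f a b -> ex_RInt g a b ->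
  RInt (fun x => f x + g x) a b = RInt f a b + RInt g a b.
Proof. intros H1 H2. exact (RInt_plus f g a b H1 H2). Qed.

Lemma RInt_minus_R (f g : R -> R) (a b : R) : ex_RInt f a b -> ex_RInt g a b ->
  RInt (fun x => f x - g x) a b = RInt f a b - RInt g a b.
Proof. intros H1 H2. exact (RInt_minus f g a b H1 H2). Qed.

Lemma RInt_const_R (c a b : R) : RInt (fun _ => c) a b = (b - a) * c.
Proof. exact (RInt_const a b c). Qed.

Lemma RInt_id01 : RInt (fun u => u) 0 1 = 1 / 2.
Proof.
  assert (H1 : forall x, Rmin 0 1 <= x <= Rmax 0 1 -> is_derive (fun x => x ^ 2 / 2) x (x))
    by (intros; auto_derive; auto; field).
  assert (H2 : forall x, Rmin 0 1 <= x <= Rmax 0 1 -> continuous (fun x => x) x)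
    by (intros; apply (@ex_derive_continuous R_AbsRing R_NormedModule); auto_derive; auto).
  rewrite (is_RInt_unique _ _ _ _ (@is_RInt_derive R_CompleteNormedModule _ _ 0 1 H1 H2)).
  unfold minus, plus, opp; simpl; field.
Qed.

Lemma RInt_par01 : RInt (fun u => u - u ^ 2) 0 1 = 1 / 6.
Proof.
  assert (H1 : forall x, Rmin 0 1 <= x <= Rmax 0 1 -> is_derive (fun x => x ^ 2 / 2 - x ^ 3 / 3) x (x - x ^ 2))
    by (intros; auto_derive; auto; field).
  assert (H2 : forall x, Rmin 0 1 <= x <= Rmax 0 1 -> continuous (fun x => x - x ^ 2) x)
    by (intros; apply (@ex_derive_continuous R_AbsRing R_NormedModule); auto_derive; auto).
  rewrite (is_RInt_unique _ _ _ _ (@is_RInt_derive R_CompleteNormedModule _ _ 0 1 H1 H2)).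
  unfold minus, plus, opp; simpl; field.
Qed.

Ltac toR := match goal with |- ?x = ?y => change (x = y :> R) end.

Ltac exr := apply (@ex_RInt_continuous R_CompleteNormedModule); intros;
  apply (@ex_derive_continuous R_AbsRing R_NormedModule); auto_derive; auto.

Lemma rho_gen (alpha delta : R) :
  spearman_rho (Cfam alpha delta) =
  12 * delta * (1 - RInt (fun u => exp (alpha * (u - u ^ 2))) 0 1) ^ 2.
Proof.
  set (E1 := RInt (fun u => exp (alpha * (u - u ^ 2))) 0 1 : R).
  unfold spearman_rho.
  rewrite (RInt_ext (fun v => RInt (fun u => Cfam alpha delta u v) 0 1)
     (fun v => (1/2) * v + (delta * (1 - E1)) * (1 - exp (alpha * (v - v ^ 2))))).
  2:{ intros v _.
      rewrite (RInt_ext _ (fun u => v * u + (delta * (1 - exp (alpha * (v - v ^ 2)))) *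
                 (1 - exp (alpha * (u - u ^ 2))))).
      2:{ intros; unfold Cfam; toR; field. }
      rewrite RInt_plus_R by exr.
      rewrite !RInt_scal_R by exr.
      rewrite RInt_minus_R by exr.
      rewrite RInt_const_R, RInt_id01. fold E1. toR. field. }
  rewrite RInt_plus_R by exr.
  rewrite !RInt_scal_R by exr.
  rewrite RInt_minus_R by exr.
  rewrite RInt_const_R, RInt_id01. fold E1. toR. field.
Qed.

Lemma gamma_gen (alpha delta : R) :
  gini_gamma (Cfam alpha delta) =
  8 * delta * (1 - 2 * RInt (fun u => exp (alpha * (u - u ^ 2))) 0 1
                 + RInt (fun u => exp ((2 * alpha) * (u - u ^ 2))) 0 1).
Proof.
  set (E1 := RInt (fun u => exp (alpha * (u - u ^ 2))) 0 1 : R).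
  set (E2 := RInt (fun u => exp ((2 * alpha) * (u - u ^ 2))) 0 1 : R).
  assert (Hg2 : forall u, exp ((2 * alpha) * (u - u ^ 2)) =
     exp (alpha * (u - u ^ 2)) * exp (alpha * (u - u ^ 2)))
    by (intros; rewrite <- exp_plus; f_equal; ring).
  assert (HJ : RInt (fun u => 1 - 2 * exp (alpha * (u - u ^ 2)) + exp ((2 * alpha) * (u - u ^ 2))) 0 1
     = 1 - 2 * E1 + E2).
  { rewrite RInt_plus_R by exr. rewrite RInt_minus_R by exr.
    rewrite RInt_scal_R by exr. rewrite RInt_const_R. fold E1 E2. toR. field. }
  unfold gini_gamma.
  rewrite (RInt_ext (fun u => Cfam alpha delta u (1 - u))
     (fun u => (u - u ^ 2) + delta * (1 - 2 * exp (alpha * (u - u ^ 2)) + exp ((2 * alpha) * (u - u ^ 2))))).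
  2:{ intros u _. unfold Cfam. rewrite Hg2.
      replace (alpha * ((1 - u) - (1 - u) ^ 2)) with (alpha * (u - u ^ 2)) by ring. toR; field. }
  rewrite (RInt_ext (fun u => u - Cfam alpha delta u u)
     (fun u => (u - u ^ 2) - delta * (1 - 2 * exp (alpha * (u - u ^ 2)) + exp ((2 * alpha) * (u - u ^ 2))))).
  2:{ intros u _. unfold Cfam. rewrite Hg2. toR; field. }
  rewrite (RInt_plus_R (fun u => u - u ^ 2) (fun u => delta * (1 - 2 * exp (alpha * (u - u ^ 2)) + exp ((2 * alpha) * (u - u ^ 2))))) by exr.
  rewrite (RInt_minus_R (fun u => u - u ^ 2) (fun u => delta * (1 - 2 * exp (alpha * (u - u ^ 2)) + exp ((2 * alpha) * (u - u ^ 2))))) by exr.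
  rewrite (RInt_scal_R (fun u => 1 - 2 * exp (alpha * (u - u ^ 2)) + exp ((2 * alpha) * (u - u ^ 2)))) by exr. rewrite HJ, RInt_par01. toR; field.
Qed.

Lemma half_sqrt (x : R) : 0 <= x -> sqrt (2 * x) / 2 = sqrt (x / 2).
Proof.
  intros Hx. replace (x / 2) with ((2 * x) / (2 * 2)) by field.
  rewrite sqrt_div_alt by lra. rewrite sqrt_square by lra. reflexivity.
Qed.

Theorem proposition1 (alpha delta : R)
  (Halpha : alpha <> 0)
  (Hdelta : Rabs delta <= delta_star alpha) :
  (alpha < 0 ->
     spearman_rho (Cfam alpha delta) =
       12 * delta * (1 - sqrt (PI / Rabs alpha) * exp (alpha / 4)
                          * erfi (sqrt (Rabs alpha) / 2)) ^ 2 /\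
     gini_gamma (Cfam alpha delta) =
       8 * delta * (1 - 2 * sqrt (PI / Rabs alpha) * exp (alpha / 4)
                          * erfi (sqrt (Rabs alpha) / 2)
                      + sqrt (PI / (2 * Rabs alpha)) * exp (alpha / 2)
                          * erfi (sqrt (Rabs alpha / 2)))) /\
  (0 < alpha ->
     spearman_rho (Cfam alpha delta) =
       12 * delta * (1 - sqrt (PI / alpha) * exp (alpha / 4)
                          * erf (sqrt alpha / 2)) ^ 2 /\
     gini_gamma (Cfam alpha delta) =
       8 * delta * (1 - 2 * sqrt (PI / alpha) * exp (alpha / 4)
                          * erf (sqrt alpha / 2)
                      + sqrt (PI / (2 * alpha)) * exp (alpha / 2)
                          * erf (sqrt (alpha / 2)))).
Proof.
  split; intros Ha; rewrite rho_gen, gamma_gen.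
  - rewrite !E_neg by lra.
    assert (H2 : Rabs (2 * alpha) = 2 * Rabs alpha) by (rewrite !Rabs_left; lra).
    rewrite H2, half_sqrt by (apply Rabs_pos).
    replace (2 * alpha / 4) with (alpha / 2) by field.
    split; ring.
  - rewrite !E_pos by lra.
    rewrite half_sqrt by lra.
    replace (2 * alpha / 4) with (alpha / 2) by field.
    split; ring.
Qed.
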